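(* Let $\mathcal{T}\in\mathbb{K}^{R\times R\times K}$ have $\mathbb{K}$-rank $R$ and full multilinear rank $(R,R,K)$, and let $\mathcal{T}=[\![\mathbf{A},\mathbf{B},\mathbf{C}]\!]$ be a CPD of $\mathcal{T}$. Then $\mathcal{T}$ is slice mix invertible and the factor matrices $\mathbf{A},\mathbf{B}\in\mathbb{K}^{R\times R}$ are invertible.
   Context: $\mathbb{K}$ denotes $\mathbb{R}$ or $\mathbb{C}$. The $\mathbb{K}$-rank is the least number of rank one tensors $\mathbf{a}\otimes\mathbf{b}\otimes\mathbf{c}$ with $\mathbb{K}$-valued factors summing to the tensor; a minimal sum $\sum_{r=1}^R\mathbf{a}_r\otimes\mathbf{b}_r\otimes\mathbf{c}_r$ is a CPD written $[\![\mathbf{A},\mathbf{B},\mathbf{C}]\!]$ (columns $\mathbf{a}_r$, etc.). Multilinear rank $(R_1,R_2,R_3)$: $R_i$ is the dimension of the span of the mode-$i$ fibers. $\mathcal{T}$ is slice mix invertible if some linear combination of its frontal slices $\mathcal{T}(:,:,k)$ is an invertible matrix. *)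

(* Defs.v *)
(* K is R (a realType, i.e. the real numbers) or its complexification R[i]. *)
From HB Require Import structures.
From mathcomp Require Import all_boot all_order all_algebra.
From mathcomp Require Import complex.
From mathcomp Require Import reals.
Set Implicit Arguments. Unset Strict Implicit. Unset Printing Implicit Defensive.
Import Order.TTheory GRing.Theory Num.Theory.
Local Open Scope ring_scope.

Definition tensor3 (F : Type) (m n p : nat) := 'I_m -> 'I_n -> 'I_p -> F.

(* [[A, B, C]] = \sum_r a_r (x) b_r (x) c_r, columns a_r = A(:,r) etc. *)
Definition cpd (F : fieldType) (m n p r : nat)
  (A : 'M[F]_(m, r)) (B : 'M[F]_(n, r)) (C : 'M[F]_(p, r)) : tensor3 F m n p :=
  fun i j k => \sum_(s < r) A i s * B j s * C k s.

Definition teq (F : Type) m n p (T U : tensor3 F m n p) :=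
  forall i j k, T i j k = U i j k.

Definition sum_of_rank1 (F : fieldType) m n p (T : tensor3 F m n p) (r : nat) :=
  exists (A : 'M[F]_(m, r)) (B : 'M[F]_(n, r)) (C : 'M[F]_(p, r)),
    teq T (cpd A B C).

Definition has_rank (F : fieldType) m n p (T : tensor3 F m n p) (r : nat) :=
  sum_of_rank1 T r /\ forall r', (r' < r)%N -> ~ sum_of_rank1 T r'.

Definition mode1_rank (F : fieldType) m n p (T : tensor3 F m n p) : nat :=
  \rank (\sum_(j < n) \sum_(k < p) <<(\row_(i < m) T i j k : 'rV[F]_m)>>)%MS.
Definition mode2_rank (F : fieldType) m n p (T : tensor3 F m n p) : nat :=
  \rank (\sum_(i < m) \sum_(k < p) <<(\row_(j < n) T i j k : 'rV[F]_n)>>)%MS.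
Definition mode3_rank (F : fieldType) m n p (T : tensor3 F m n p) : nat :=
  \rank (\sum_(i < m) \sum_(j < n) <<(\row_(k < p) T i j k : 'rV[F]_p)>>)%MS.

Definition has_mlrank (F : fieldType) m n p (T : tensor3 F m n p) (r1 r2 r3 : nat) :=
  [/\ mode1_rank T = r1, mode2_rank T = r2 & mode3_rank T = r3].

Definition frontal_slice (F : fieldType) m n p (T : tensor3 F m n p) (k : 'I_p)
  : 'M[F]_(m, n) := \matrix_(i, j) T i j k.

Definition slice_mix_invertible (F : fieldType) n p (T : tensor3 F n n p) :=
  exists w : 'I_p -> F, (\sum_(k < p) w k *: frontal_slice T k) \in unitmx.

Definition lemma3p1_over (F : fieldType) :=
  forall (Rn Kn : nat) (T : tensor3 F Rn Rn Kn),
    has_rank T Rn -> has_mlrank T Rn Rn Kn ->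
    forall (A : 'M[F]_(Rn, Rn)) (B : 'M[F]_(Rn, Rn)) (C : 'M[F]_(Kn, Rn)),
      teq T (cpd A B C) ->
      [/\ slice_mix_invertible T, A \in unitmx & B \in unitmx].

(* Main.v *)
Require Import Defs.
From HB Require Import structures.
From mathcomp Require Import all_boot all_order all_algebra complex reals.
From mathcomp Require Import ring.
Import Order.TTheory GRing.Theory Num.Theory.
Local Open Scope ring_scope.

Lemma gen (F : numFieldType) : lemma3p1_over F.
Proof.
move=> n p T [_ hmin] [h1 h2 h3] A B C hT.
have hA : A \in unitmx.
  rewrite -row_free_unit /row_free -mxrank_tr eqn_leq rank_leq_row /= -{1}h1 /mode1_rank.
  apply: mxrankS; apply/sumsmx_subP => j _; apply/sumsmx_subP => k _; rewrite genmxE.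
  have -> : (\row_i T i j k) = (\row_s (B j s * C k s)) *m A^T.
    apply/rowP => i; rewrite !mxE hT /cpd; apply: eq_bigr => s _; rewrite !mxE; ring.
  exact: submxMl.
have hB : B \in unitmx.
  rewrite -row_free_unit /row_free -mxrank_tr eqn_leq rank_leq_row /= -{1}h2 /mode2_rank.
  apply: mxrankS; apply/sumsmx_subP => i _; apply/sumsmx_subP => k _; rewrite genmxE.
  have -> : (\row_j T i j k) = (\row_s (A i s * C k s)) *m B^T.
    apply/rowP => j; rewrite !mxE hT /cpd; apply: eq_bigr => s _; rewrite !mxE; ring.
  exact: submxMl.
have hC : forall s, exists k, C k s != 0.
  move=> s; case: (boolP [exists k, C k s != 0]) => [/existsP //|/existsPn hz].
  exfalso; apply: (hmin n.-1).
    have n0 : (0 < n)%N by apply: (leq_ltn_trans (leq0n s) (ltn_ord s)).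
    by rewrite ltn_predL.
  exists (col' s A), (col' s B), (col' s C) => i j k.
  rewrite hT /cpd (bigD1_ord s) //= (eqP (negbNE (hz k))) mulr0 add0r.
  by apply: eq_bigr => t _; rewrite !mxE.
pose q s := \sum_(k < p) C k s *: ('X^k : {poly F}).
have hq : forall s, q s != 0.
  move=> s; case: (hC s) => k0 hk0; apply: contraNneq hk0 => hq0.
  have := congr1 (fun P : {poly F} => P`_k0) hq0.
  rewrite coef0 coef_sum => <-.
  rewrite (bigD1 k0) //= coefZ coefXn eqxx mulr1 big1 ?addr0 // => k hk.
  have : (k0 : nat) != k by rewrite eq_sym; exact: hk.
  by move/negbTE; rewrite coefZ coefXn => ->; rewrite mulr0.
pose P := \prod_s q s.
have hP : P != 0 by apply/prodf_neq0 => s _; exact: hq.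
have [t ht] : exists t, ~~ root P t.
  pose rs := [seq i%:R | i <- iota 0 (size P)] : seq F.
  case: (boolP (all (root P) rs)) => [hall|]; last first.
    by move/allPn => [x _ hx]; exists x.
  have hu : uniq rs.
    rewrite map_inj_uniq ?iota_uniq // => a b /eqP; rewrite eqr_nat => /eqP //.
  by have := max_poly_roots hP hall hu; rewrite size_map size_iota ltnn.
split => //.
exists (fun k => t ^+ k).
have -> : \sum_(k < p) t ^+ k *: frontal_slice T k
          = A *m diag_mx (\row_s (q s).[t]) *m B^T.
  apply/matrixP => i j; rewrite summxE mul_mx_diag !mxE.
  under eq_bigr do rewrite !mxE hT /cpd mulr_sumr.
  rewrite exchange_big; apply: eq_bigr => s _; rewrite !mxE /q horner_sum.
  rewrite mulr_sumr mulr_suml; apply: eq_bigr => k _.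
  rewrite hornerZ hornerXn; ring.
rewrite !unitmx_mul unitmx_tr hA hB /= andbT unitmxE det_diag unitfE.
under eq_bigr do rewrite mxE.
by rewrite -horner_prod.
Qed.

Theorem lemma3p1 (R : realType) : lemma3p1_over R /\ lemma3p1_over R[i].
Proof. by split; apply: gen. Qed.
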